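(* Let $\Diamond_{ij;kl}$ be a hinge (edge $e_{ij}$ with faces $f_{ijk}$, $f_{ijl}$) with radii $p=r_k,q=r_i,r=r_l,s=r_j>0$ and inversive distances $a=I_{ki},b=I_{il},c=I_{lj},d=I_{jk},e=I_{ij}>1$, such that the edge lengths $l_{\alpha\beta}=\sqrt{r_\alpha^2+r_\beta^2+2I_{\alpha\beta}r_\alpha r_\beta}$ satisfy the triangle inequalities on both faces; develop the hinge into $\mathbb{E}^2$. Then $e_{ij}$ is local weighted Delaunay, i.e. $h_{ij,k}+h_{ij,l}\ge0$, if and only if \[\frac{\sqrt{\Delta_{bce}}}{p}+\frac{\sqrt{\Delta_{ade}}}{r}\le\frac{\sqrt{\Delta_{cdf}}}{q}+\frac{\sqrt{\Delta_{abf}}}{s},\] where $\Delta_{xyz}=x^2+y^2+z^2+2xyz-1$ and $f=\frac{ab+cd+ace+bde+\sqrt{\Delta_{ade}}\sqrt{\Delta_{bce}}}{e^2-1}$.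
   Context: For a Euclidean triangle $f_{ijk}$ with circles of radii $r_i,r_j,r_k$ at the vertices, $O_{ijk}$ denotes the center of the unique circle orthogonal to all three circles (equivalently the point with $|O_{ijk}v_\alpha|^2-r_\alpha^2$ equal for $\alpha=i,j,k$). $h_{ij,k}$ is the distance from $O_{ijk}$ to the line of $e_{ij}$, taken positive if $O_{ijk}$ and $v_k$ lie on the same side of $e_{ij}$ and negative otherwise; similarly $h_{ij,l}$ for $f_{ijl}$. *)

(* Defs.v *)
From mathcomp Require Import all_boot all_order all_algebra.
Set Implicit Arguments. Unset Strict Implicit. Unset Printing Implicit Defensive.
Import Order.TTheory GRing.Theory Num.Theory.
Local Open Scope ring_scope.

Definition sqdist (R : rcfType) (u v : R * R) : R :=
  (u.1 - v.1) ^+ 2 + (u.2 - v.2) ^+ 2.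

Definition dist (R : rcfType) (u v : R * R) : R := Num.sqrt (sqdist u v).

Definition cross (R : rcfType) (a b c : R * R) : R :=
  (b.1 - a.1) * (c.2 - a.2) - (b.2 - a.2) * (c.1 - a.1).

Definition edge_len (R : rcfType) (ra rb I : R) : R :=
  Num.sqrt (ra ^+ 2 + rb ^+ 2 + 2 * I * ra * rb).

Definition power (R : rcfType) (O v : R * R) (r : R) : R := sqdist O v - r ^+ 2.

(* O is the centre of the circle orthogonal to the three vertex circles:
   |O v_a|^2 - r_a^2 = |O v_b|^2 - r_b^2 = |O v_c|^2 - r_c^2. *)
Definition is_orth_center (R : rcfType) (O va vb vc : R * R) (ra rb rc : R) : Prop :=
  power O va ra = power O vb rb /\ power O vb rb = power O vc rc.

(* h_{ab,c}: distance from O to the line of edge (va,vb), positive if O and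
   vc lie on the same side of that line, negative otherwise. *)
Definition signed_height (R : rcfType) (va vb vc O : R * R) : R :=
  cross va vb O / dist va vb * Num.sg (cross va vb vc).

Definition Delta (R : rcfType) (x y z : R) : R :=
  x ^+ 2 + y ^+ 2 + z ^+ 2 + 2 * x * y * z - 1.

(* Main.v *)
Require Import Defs.
From mathcomp Require Import all_boot all_order all_algebra.
From mathcomp Require Import ring lra.
Set Implicit Arguments. Unset Strict Implicit.
Import Order.TTheory GRing.Theory Num.Theory.
Local Open Scope ring_scope.

Lemma key (R : rcfType) (U E x y P Q A B : R) : 0 < U -> 0 < E -> 0 < P -> 0 < Q -> 0 < A -> 0 < B ->
  A ^+ 2 * E = U * P ^+ 2 - x ^+ 2 -> B ^+ 2 * E = U * Q ^+ 2 - y ^+ 2 ->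
  x < 0 -> 0 <= y ->
  ((0 <= x * B + y * A) = (P * B <= A * Q)) /\ ((0 <= x * Q + y * P) = (P * B <= A * Q)).
Proof.
move=> hU hE hP hQ hA hB hx hy xn yp.
have sq : forall u v : R, 0 <= u -> 0 <= v -> (u <= v) = (u ^+ 2 <= v ^+ 2).
  by move=> u v hu hv; rewrite ler_sqr.
have e1 : (0 <= x * B + y * A) = (- x * B <= y * A).
  by apply/idP/idP => h; lra.
have e2 : (0 <= x * Q + y * P) = (- x * Q <= y * P).
  by apply/idP/idP => h; lra.
have e3 : (P * B <= A * Q) = ((P * B) ^+ 2 <= (A * Q) ^+ 2).
  by apply: sq; apply: mulr_ge0; lra.
have p1 : 0 <= - x * B by apply: mulr_ge0; lra.
have p2 : 0 <= - x * Q by apply: mulr_ge0; lra.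
have p3 : 0 <= y * A by apply: mulr_ge0; lra.
have p4 : 0 <= y * P by apply: mulr_ge0; lra.
rewrite e1 e2 e3 (sq _ _ p1 p3) (sq _ _ p2 p4).
have i1 : (y * A) ^+ 2 - (- x * B) ^+ 2 = U * ((A * Q) ^+ 2 - (P * B) ^+ 2).
  have -> : (y * A) ^+ 2 - (- x * B) ^+ 2 = y ^+ 2 * A ^+ 2 - x ^+ 2 * B ^+ 2 by ring.
  have -> : y ^+ 2 = U * Q ^+ 2 - B ^+ 2 * E by rewrite hy; ring.
  have -> : x ^+ 2 = U * P ^+ 2 - A ^+ 2 * E by rewrite hx; ring.
  ring.
have i2 : (y * P) ^+ 2 - (- x * Q) ^+ 2 = E * ((A * Q) ^+ 2 - (P * B) ^+ 2).
  have -> : (y * P) ^+ 2 - (- x * Q) ^+ 2 = y ^+ 2 * P ^+ 2 - x ^+ 2 * Q ^+ 2 by ring.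
  have -> : y ^+ 2 = U * Q ^+ 2 - B ^+ 2 * E by rewrite hy; ring.
  have -> : x ^+ 2 = U * P ^+ 2 - A ^+ 2 * E by rewrite hx; ring.
  ring.
set D := (A * Q) ^+ 2 - (P * B) ^+ 2 in i1 i2 *.
have hD1 : ((- x * B) ^+ 2 <= (y * A) ^+ 2) = (0 <= D).
  by rewrite -subr_ge0 i1 pmulr_rge0.
have hD2 : ((- x * Q) ^+ 2 <= (y * P) ^+ 2) = (0 <= D).
  by rewrite -subr_ge0 i2 pmulr_rge0.
have hD3 : ((P * B) ^+ 2 <= (A * Q) ^+ 2) = (0 <= D) by rewrite subr_ge0.
by rewrite hD1 hD2 hD3.
Qed.

Lemma core (R : rcfType) (U E x y P Q A B : R) : 0 < U -> 0 < E ->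
  0 < P -> 0 < Q -> 0 < A -> 0 < B ->
  A ^+ 2 * E = U * P ^+ 2 - x ^+ 2 -> B ^+ 2 * E = U * Q ^+ 2 - y ^+ 2 ->
  (0 <= x * B + y * A) = (0 <= x * Q + y * P).
Proof.
move=> hU hE hP hQ hA hB hx hy.
case: (ltrP x 0) => hxs; case: (ltrP y 0) => hys.
- have -> : (0 <= x * B + y * A) = false.
    apply/negbTE; rewrite -ltNge; nra.
  apply/esym/negbTE; rewrite -ltNge; nra.
- by have [-> ->] := key hU hE hP hQ hA hB hx hy hxs hys.
- have [h1 h2] := key hU hE hQ hP hB hA hy hx hys hxs.
  by rewrite addrC h1 addrC h2.
- apply/idP/idP => _; nra.
Qed.

Definition nfac (R : rcfType) (p q s a d e : R) : R :=
  - (e ^+ 2 - 1) * q * s + p * s * (a + d * e) + p * q * (d + a * e).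

Lemma face (R : rcfType) (p q s a d e u1 u2 w1 w2 o1 o2 : R) :
  u1 ^+ 2 + u2 ^+ 2 = q ^+ 2 + s ^+ 2 + 2 * e * q * s ->
  w1 ^+ 2 + w2 ^+ 2 = p ^+ 2 + q ^+ 2 + 2 * a * p * q ->
  (w1 - u1) ^+ 2 + (w2 - u2) ^+ 2 = s ^+ 2 + p ^+ 2 + 2 * d * s * p ->
  o1 ^+ 2 + o2 ^+ 2 - q ^+ 2 = (o1 - u1) ^+ 2 + (o2 - u2) ^+ 2 - s ^+ 2 ->
  (o1 - u1) ^+ 2 + (o2 - u2) ^+ 2 - s ^+ 2 = (o1 - w1) ^+ 2 + (o2 - w2) ^+ 2 - p ^+ 2 ->
  (u1 * w2 - u2 * w1) * (u1 * o2 - u2 * o1) = q * s * nfac p q s a d e /\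
  (u1 * w2 - u2 * w1) ^+ 2 * (e ^+ 2 - 1) =
     (q ^+ 2 + s ^+ 2 + 2 * e * q * s) * (p ^+ 2 * Delta a d e) - (nfac p q s a d e) ^+ 2.
Proof.
move=> hu hw hwu ho1 ho2.
have huw : u1 * w1 + u2 * w2 = ((q ^+ 2 + s ^+ 2 + 2 * e * q * s) + (p ^+ 2 + q ^+ 2 + 2 * a * p * q) - (s ^+ 2 + p ^+ 2 + 2 * d * s * p)) / 2.
  by rewrite -hu -hw -hwu; field.
have huo : u1 * o1 + u2 * o2 = ((q ^+ 2 + s ^+ 2 + 2 * e * q * s) + q ^+ 2 - s ^+ 2) / 2.
  rewrite -hu; apply/eqP; rewrite -subr_eq0; apply/eqP.
  have -> : u1 * o1 + u2 * o2 - (u1 ^+ 2 + u2 ^+ 2 + q ^+ 2 - s ^+ 2) / 2 =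
     ((o1 ^+ 2 + o2 ^+ 2 - q ^+ 2) - ((o1 - u1) ^+ 2 + (o2 - u2) ^+ 2 - s ^+ 2)) / 2 by field.
  by rewrite ho1 subrr mul0r.
have hwo : w1 * o1 + w2 * o2 = ((p ^+ 2 + q ^+ 2 + 2 * a * p * q) + q ^+ 2 - p ^+ 2) / 2.
  rewrite -hw; apply/eqP; rewrite -subr_eq0; apply/eqP.
  have -> : w1 * o1 + w2 * o2 - (w1 ^+ 2 + w2 ^+ 2 + q ^+ 2 - p ^+ 2) / 2 =
     ((o1 ^+ 2 + o2 ^+ 2 - q ^+ 2) - ((o1 - w1) ^+ 2 + (o2 - w2) ^+ 2 - p ^+ 2)) / 2 by field.
  by rewrite ho1 ho2 subrr mul0r.
have b1 : (u1 * w2 - u2 * w1) * (u1 * o2 - u2 * o1) =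
   (u1 ^+ 2 + u2 ^+ 2) * (w1 * o1 + w2 * o2) - (u1 * w1 + u2 * w2) * (u1 * o1 + u2 * o2) by ring.
have b2 : (u1 * w2 - u2 * w1) ^+ 2 =
   (u1 ^+ 2 + u2 ^+ 2) * (w1 ^+ 2 + w2 ^+ 2) - (u1 * w1 + u2 * w2) ^+ 2 by ring.
rewrite b1 b2 hu hw huw huo hwo /nfac /Delta; by split; field.
Qed.

Lemma delta_pos (R : rcfType) (x y z : R) : 1 < x -> 1 < y -> 1 < z -> 0 < Delta x y z.
Proof.
rewrite /Delta => hx hy hz.
have h1 : 1 < x * y by nra.
have h2 : 1 < x * y * z by nra.
have h3 : 1 < x ^+ 2 by nra.
have h4 : 0 <= y ^+ 2 + z ^+ 2 by nra.
nra.
Qed.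

Lemma sqrt_id (R : rcfType) (a b c d e : R) :
  1 < a -> 1 < b -> 1 < c -> 1 < d -> 1 < e ->
  let X := Num.sqrt (Delta a d e) in let Y := Num.sqrt (Delta b c e) in
  let f := (a * b + c * d + a * c * e + b * d * e + X * Y) / (e ^+ 2 - 1) in
  Num.sqrt (Delta c d f) = ((a + e * d) * Y + (b + e * c) * X) / (e ^+ 2 - 1) /\
  Num.sqrt (Delta a b f) = ((d + e * a) * Y + (c + e * b) * X) / (e ^+ 2 - 1).
Proof.
move=> ha hb hc hd he X Y f.
have hX : X ^+ 2 = Delta a d e by rewrite sqr_sqrtr // ltW // delta_pos.
have hY : Y ^+ 2 = Delta b c e by rewrite sqr_sqrtr // ltW // delta_pos.
have X0 : 0 <= X by apply: sqrtr_ge0.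
have Y0 : 0 <= Y by apply: sqrtr_ge0.
have hE : 0 < e ^+ 2 - 1 by nra.
have hE0 : e ^+ 2 - 1 != 0 by rewrite gt_eqF.
split.
  have -> : Delta c d f = (((a + e * d) * Y + (b + e * c) * X) / (e ^+ 2 - 1)) ^+ 2 +
     ((Y ^+ 2 - (b + c * e) ^+ 2) * (X ^+ 2 - Delta a d e) + (e ^+ 2 - 1) * (1 - d ^+ 2) * (Y ^+ 2 - Delta b c e)) / (e ^+ 2 - 1) ^+ 2.
    by rewrite /f /Delta; field.
  rewrite hX hY !subrr !mulr0 addr0 mul0r addr0 sqrtr_sqr ger0_norm //.
  apply: divr_ge0; last by apply: ltW.
  apply: addr_ge0; apply: mulr_ge0 => //; nra.
have -> : Delta a b f = (((d + e * a) * Y + (c + e * b) * X) / (e ^+ 2 - 1)) ^+ 2 +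
   ((Y ^+ 2 - (c + b * e) ^+ 2) * (X ^+ 2 - Delta a d e) + (e ^+ 2 - 1) * (1 - a ^+ 2) * (Y ^+ 2 - Delta b c e)) / (e ^+ 2 - 1) ^+ 2.
  by rewrite /f /Delta; field.
rewrite hX hY !subrr !mulr0 addr0 mul0r addr0 sqrtr_sqr ger0_norm //.
apply: divr_ge0; last by apply: ltW.
apply: addr_ge0; apply: mulr_ge0 => //; nra.
Qed.

Lemma lhs_eq (R : rcfType) (L qs E U Ck Cl Hk Hl nk nl P Q : R) :
  0 < L -> 0 < qs -> 0 < U -> 0 < E -> 0 < P -> 0 < Q -> Ck * Cl < 0 ->
  Ck * Hk = qs * nk -> Cl * Hl = qs * nl ->
  Ck ^+ 2 * E = U * P ^+ 2 - nk ^+ 2 -> Cl ^+ 2 * E = U * Q ^+ 2 - nl ^+ 2 ->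
  (0 <= Hk / L * Num.sg Ck + Hl / L * Num.sg Cl) = (0 <= nk * Q + nl * P).
Proof.
move=> hL hqs hU hE hP hQ hC hk hl hk2 hl2.
have Ck0 : Ck != 0 by apply/eqP => h; move: hC; rewrite h mul0r ltxx.
have Cl0 : Cl != 0 by apply/eqP => h; move: hC; rewrite h mulr0 ltxx.
have L0 : L != 0 by rewrite gt_eqF.
have eHk : Hk = qs * nk / Ck by rewrite -hk; field.
have eHl : Hl = qs * nl / Cl by rewrite -hl; field.
case: (ltrP 0 Ck) => hCk.
- have hCl : Cl < 0 by nra.
  rewrite gtr0_sg // ltr0_sg // eHk eHl.
  have -> : qs * nk / Ck / L * 1 + qs * nl / Cl / L * -1 =
      (nk * (- Cl) + nl * Ck) * (qs / (L * Ck * (- Cl))) by field; rewrite Cl0 Ck0 L0.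
  rewrite pmulr_lge0; last by apply: divr_gt0 => //; apply: mulr_gt0; [apply: mulr_gt0|]; lra.
  apply: core hU hE hP hQ hCk _ _ _ => //; first by lra.
  by rewrite sqrrN.
- have hCk' : Ck < 0 by rewrite lt_neqAle hCk Ck0.
  have hCl : 0 < Cl by nra.
  rewrite ltr0_sg // gtr0_sg // eHk eHl.
  have -> : qs * nk / Ck / L * -1 + qs * nl / Cl / L * 1 =
      (nk * Cl + nl * (- Ck)) * (qs / (L * (- Ck) * Cl)) by field; rewrite Cl0 Ck0 L0.
  rewrite pmulr_lge0; last by apply: divr_gt0 => //; apply: mulr_gt0; [apply: mulr_gt0|]; lra.
  apply: core hU hE hP hQ _ hCl _ _ => //; first by lra.
  by rewrite sqrrN.
Qed.

Lemma rhs_eq (R : rcfType) (p q r s a b c d e X Y : R) :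
  0 < p -> 0 < q -> 0 < r -> 0 < s -> 1 < e ->
  (Y / p + X / r <= ((a + e * d) * Y + (b + e * c) * X) / (e ^+ 2 - 1) / q
                    + ((d + e * a) * Y + (c + e * b) * X) / (e ^+ 2 - 1) / s)
  = (0 <= nfac p q s a d e * (r * Y) + nfac r q s b c e * (p * X)).
Proof.
move=> hp hq hr hs he.
have hE : 0 < e ^+ 2 - 1 by nra.
have hE0 : e ^+ 2 - 1 != 0 by rewrite gt_eqF.
have p0 : p != 0 by rewrite gt_eqF.
have q0 : q != 0 by rewrite gt_eqF.
have r0 : r != 0 by rewrite gt_eqF.
have s0 : s != 0 by rewrite gt_eqF.
rewrite -subr_ge0.
have -> : ((a + e * d) * Y + (b + e * c) * X) / (e ^+ 2 - 1) / q
   + ((d + e * a) * Y + (c + e * b) * X) / (e ^+ 2 - 1) / s - (Y / p + X / r)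
   = (nfac p q s a d e * (r * Y) + nfac r q s b c e * (p * X)) * ((e ^+ 2 - 1) * p * q * r * s)^-1.
  rewrite /nfac; field; by rewrite hE0 p0 q0 r0 s0.
rewrite pmulr_lge0 // invr_gt0.
by repeat apply: mulr_gt0.
Qed.

Lemma sqd (R : rcfType) (u v : R * R) (x : R) : 0 <= x ->
  dist u v = Num.sqrt x -> sqdist u v = x.
Proof.
move=> hx h.
have h2 := congr1 (fun t => t ^+ 2) h; move: h2 => /=.
rewrite /dist !sqr_sqrtr // /sqdist; apply: addr_ge0; apply: sqr_ge0.
Qed.

Lemma face_pts (R : rcfType) (p q s a d e : R) (vi vj vk O : R * R) :
  sqdist vi vj = q ^+ 2 + s ^+ 2 + 2 * e * q * s ->
  sqdist vi vk = p ^+ 2 + q ^+ 2 + 2 * a * p * q ->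
  sqdist vk vj = s ^+ 2 + p ^+ 2 + 2 * d * s * p ->
  is_orth_center O vi vj vk q s p ->
  cross vi vj vk * cross vi vj O = q * s * nfac p q s a d e /\
  cross vi vj vk ^+ 2 * (e ^+ 2 - 1) =
     (q ^+ 2 + s ^+ 2 + 2 * e * q * s) * (p ^+ 2 * Delta a d e) - (nfac p q s a d e) ^+ 2.
Proof.
move=> h1 h2 h3 [h4 h5].
move: h1 h2 h3 h4 h5; rewrite /is_orth_center /power /sqdist /cross.
case: vi => xi yi; case: vj => xj yj; case: vk => xk yk; case: O => xo yo /= h1 h2 h3 h4 h5.
apply: (face (u1 := xj - xi) (u2 := yj - yi) (w1 := xk - xi) (w2 := yk - yi) (o1 := xo - xi) (o2 := yo - yi)).
- by rewrite -h1; ring.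
- by rewrite -h2; ring.
- by rewrite -h3; ring.
- have -> : (xo - xi - (xj - xi)) = xo - xj by ring.
  have -> : (yo - yi - (yj - yi)) = yo - yj by ring.
  exact: h4.
- have -> : (xo - xi - (xj - xi)) = xo - xj by ring.
  have -> : (yo - yi - (yj - yi)) = yo - yj by ring.
  have -> : (xo - xi - (xk - xi)) = xo - xk by ring.
  have -> : (yo - yi - (yk - yi)) = yo - yk by ring.
  exact: h5.
Qed.

Unset Implicit Arguments.
Set Strict Implicit.

Theorem lemma4p5 (R : rcfType) (p q r s a b c d e : R)
    (vi vj vk vl Oijk Oijl : R * R) :
  0 < p -> 0 < q -> 0 < r -> 0 < s ->
  1 < a -> 1 < b -> 1 < c -> 1 < d -> 1 < e ->
  let lij := edge_len q s e in
  let ljk := edge_len s p d in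
  let lki := edge_len p q a in
  let lil := edge_len q r b in
  let llj := edge_len r s c in
  (* triangle inequalities on f_ijk *)
  lij < ljk + lki -> ljk < lki + lij -> lki < lij + ljk ->
  (* triangle inequalities on f_ijl *)
  lij < llj + lil -> llj < lil + lij -> lil < lij + llj ->
  (* development of the hinge into E^2 *)
  dist vi vj = lij -> dist vj vk = ljk -> dist vk vi = lki ->
  dist vi vl = lil -> dist vl vj = llj ->
  cross vi vj vk * cross vi vj vl < 0 ->
  is_orth_center Oijk vi vj vk q s p ->
  is_orth_center Oijl vi vj vl q s r ->
  let f := (a * b + c * d + a * c * e + b * d * e
            + Num.sqrt (Delta a d e) * Num.sqrt (Delta b c e)) / (e ^+ 2 - 1) in
  (0 <= signed_height vi vj vk Oijk + signed_height vi vj vl Oijl) <->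
  (Num.sqrt (Delta b c e) / p + Num.sqrt (Delta a d e) / r
     <= Num.sqrt (Delta c d f) / q + Num.sqrt (Delta a b f) / s).
Proof.
move=> hp hq hr hs ha hb hc hd he lij ljk lki lil llj _ _ _ _ _ _
  Hij Hjk Hki Hil Hlj HC Ok Ol f.
have [E1 E2] := sqrt_id ha hb hc hd he.
rewrite -/f in E1 E2; rewrite E1 E2 rhs_eq //.
have pos : forall x y I : R, 0 < x -> 0 < y -> 1 < I -> 0 <= x ^+ 2 + y ^+ 2 + 2 * I * x * y.
  move=> x y I hx hy hI; apply: addr_ge0; first by apply: addr_ge0; apply: sqr_ge0.
  by repeat apply: mulr_ge0 => //; lra.
have Sij := sqd (pos _ _ _ hq hs he) Hij.
have Sjk := sqd (pos _ _ _ hs hp hd) Hjk.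
have Ski := sqd (pos _ _ _ hp hq ha) Hki.
have Sil := sqd (pos _ _ _ hq hr hb) Hil.
have Slj := sqd (pos _ _ _ hr hs hc) Hlj.
have symd : forall u v : R * R, sqdist u v = sqdist v u by move=> u v; rewrite /sqdist; ring.
have [k1 k2] := face_pts Sij (etrans (symd _ _) Ski) (etrans (symd _ _) Sjk) Ok.
have Sil' : sqdist vi vl = r ^+ 2 + q ^+ 2 + 2 * b * r * q by rewrite Sil; ring.
have Slj' : sqdist vl vj = s ^+ 2 + r ^+ 2 + 2 * c * s * r by rewrite Slj; ring.
have [l1 l2] := face_pts Sij Sil' Slj' Ol.
set X := Num.sqrt (Delta a d e).
set Y := Num.sqrt (Delta b c e).
have hX : X ^+ 2 = Delta a d e by rewrite sqr_sqrtr // ltW // delta_pos.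
have hY : Y ^+ 2 = Delta b c e by rewrite sqr_sqrtr // ltW // delta_pos.
have X0 : 0 < X by rewrite sqrtr_gt0 delta_pos.
have Y0 : 0 < Y by rewrite sqrtr_gt0 delta_pos.
have hU : 0 < q ^+ 2 + s ^+ 2 + 2 * e * q * s.
  have h1 : 0 < 2 * e * q * s by repeat apply: mulr_gt0 => //; lra.
  have h2 := sqr_ge0 q; have h3 := sqr_ge0 s; lra.
have hL : 0 < dist vi vj by rewrite Hij /lij /edge_len sqrtr_gt0.
rewrite /signed_height.
rewrite (lhs_eq (L := dist vi vj) (qs := q * s) (E := e ^+ 2 - 1)
   (U := q ^+ 2 + s ^+ 2 + 2 * e * q * s) (P := p * X) (Q := r * Y) hL _ hU _ _ _ HC k1 l1).
- by [].
- by apply: mulr_gt0.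
- nra.
- by apply: mulr_gt0.
- by apply: mulr_gt0.
- by rewrite k2 exprMn hX.
- by rewrite l2 exprMn hY.
Qed.
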